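(* Let $s\ge 1$ be an integer and let $T$ be a tree with maximum degree $\Delta(T)\ge 2$. Then $$br_{\Delta}(T;s)\le 2s(\Delta(T)-1).$$
   Context: For graphs $H$ and $G$ and a positive integer $s$, write $H\xrightarrow{s} G$ if every coloring of the edges of $H$ with $s$ colors contains a monochromatic subgraph isomorphic to $G$. The degree bipartite Ramsey number is $br_{\Delta}(G;s)=\min\{\Delta(H): H \text{ is bipartite and } H\xrightarrow{s} G\}$, where $\Delta(H)$ denotes the maximum degree of $H$. *)

(* Defs.v *)
From mathcomp Require Import all_boot.
Set Implicit Arguments. Unset Strict Implicit. Unset Printing Implicit Defensive.

Record sgraph := SGraph {
  vert :> finType;
  adj : rel vert;
  adj_sym : symmetric adj;
  adj_irr : irreflexive adj }.
Arguments adj s : clear implicits.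

Definition deg (G : sgraph) (v : vert G) : nat := #|[set w : vert G | adj G v w]|.
Definition maxdeg (G : sgraph) : nat := \max_(v : vert G) deg v.

Definition bipartite (G : sgraph) : Prop :=
  exists f : vert G -> bool, forall u v, adj G u v -> f u != f v.

Definition connected (G : sgraph) : Prop :=
  forall u v : vert G, connect (adj G) u v.
Definition acyclic (G : sgraph) : Prop :=
  forall c : seq (vert G), uniq c -> 3 <= size c -> ~~ cycle (adj G) c.
Definition is_tree (G : sgraph) : Prop := connected G /\ acyclic G.

Definition edge_colouring (H : sgraph) (s : nat) (col : vert H -> vert H -> 'I_s) : Prop :=
  forall u v, adj H u v -> col u v = col v u.

Definition arrows (H : sgraph) (s : nat) (G : sgraph) : Prop :=
  forall col : vert H -> vert H -> 'I_s, edge_colouring col ->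
    exists (i : 'I_s) (phi : vert G -> vert H), injective phi /\
      forall u v, adj G u v -> adj H (phi u) (phi v) /\ col (phi u) (phi v) = i.

(* br_Delta(G; s) <= k, i.e. min{Delta(H) : H bipartite, H -s-> G} <= k,
   unfolded as: some bipartite H with H -s-> G has Delta(H) <= k. *)
Definition br_deg_le (G : sgraph) (s k : nat) : Prop :=
  exists H : sgraph, bipartite H /\ arrows H s G /\ maxdeg H <= k.

(* Main.v *)
Require Import Defs.
From mathcomp Require Import all_boot.
From mathcomp Require Import all_fingroup zify.
Set Implicit Arguments. Unset Strict Implicit. Unset Printing Implicit Defensive.

Lemma ext_perm (X : finType) (D : {pred X}) (f : X -> X) :
  {in D &, injective f} -> {p : {perm X} | {in D, forall x, p x = f x}}.
Proof.
move=> injf.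
set D' := [set x in D]. set R := f @: D'.
have cR : #|R| = #|D'| by apply: card_in_imset => x y; rewrite !inE; apply: injf.
have cC : #|~: R| = #|~: D'|.
  by apply/eqP; rewrite -(eqn_add2l #|R|) cardsC {1}cR cardsC.
pose h x := if x \in D then f x else nth x (enum (~: R)) (index x (enum (~: D'))).
have hinj : injective h.
  have side : forall x y, x \in D -> y \notin D -> f x <> nth y (enum (~: R)) (index y (enum (~: D'))).
    move=> x y xD yD E.
    have yD' : y \in enum (~: D') by rewrite mem_enum !inE.
    have : nth y (enum (~: R)) (index y (enum (~: D'))) \in enum (~: R).
      by apply: mem_nth; rewrite -cardE cC cardE index_mem.
    by rewrite -E mem_enum !inE imset_f // inE.
  move=> x y; rewrite /h; case: ifP => xD; case: ifP => yD.
  - by apply: injf.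
  - by move=> E; case: (side x y xD (negbT yD)).
  - by move=> E; case: (side y x yD (negbT xD)).
  have xD' : x \in enum (~: D') by rewrite mem_enum !inE xD.
  have yD' : y \in enum (~: D') by rewrite mem_enum !inE yD.
  move=> E.
  have ix : index x (enum (~: D')) < size (enum (~: R)) by rewrite -cardE cC cardE index_mem.
  have iy : index y (enum (~: D')) < size (enum (~: R)) by rewrite -cardE cC cardE index_mem.
  have : index x (enum (~: D')) = index y (enum (~: D')).
    apply/eqP; rewrite -(nth_uniq x ix iy (enum_uniq _)).
    by rewrite E (set_nth_default y x iy).
  move=> Ei; rewrite -(nth_index x xD') Ei (set_nth_default y x) ?nth_index //.
  by rewrite index_mem.
exists (perm hinj) => x xD; by rewrite permE /h xD.
Qed.

Section FreeAct.
Variables (k g : nat).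
Definition L := ('I_k * bool)%type.
Definition linv (a : L) : L := (a.1, ~~ a.2).
Definition nr (a b : L) := b != linv a.
Definition red (w : seq L) := sorted nr w.
Fixpoint allw n : seq (seq L) :=
  [::] :: (if n is n'.+1 then [seq a :: w | a <- enum {: L}, w <- allw n'] else [::]).

Lemma mem_allw n w : (w \in allw n) = (size w <= n).
Proof.
elim: n w => [|n IH] [|a w] //=.
rewrite in_cons /=; apply/allpairsP/idP.
  by case=> -[b u] /= [_]; rewrite IH => su [_ ->].
by move=> sw; exists (a, w) => /=; rewrite ?mem_enum ?IH.
Qed.

Definition X := seq_sub (allw g).
Lemma nil_allw : [::] \in allw g. Proof. by rewrite mem_allw. Qed.
Definition eps : X := SeqSub nil_allw.

Section Piv.
Variable i : 'I_k.
Definition Dp : {pred X} :=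
  [pred v : X | red (val v) && ((ohead (val v) == Some (i, false)) || (size (val v) < g))].
Definition fpw (w : seq L) := if ohead w == Some (i, false) then behead w else (i, true) :: w.
Definition fp (v : X) : X := insubd v (fpw (val v)).

Lemma fpE v : v \in Dp -> val (fp v) = fpw (val v).
Proof.
rewrite inE /fp /fpw => /andP[_ H]; rewrite insubdK // mem_allw.
have := valP v; rewrite /= mem_allw => sv.
case: ifP H => [_ _|_ /= ->//]; by case: (val v) sv => //= a w /ltnW.
Qed.

Lemma fp_inj : {in Dp &, injective fp}.
Proof.
move=> v1 v2 D1 D2 E; apply: val_inj; move: (f_equal val E).
rewrite !fpE // /fpw.
move: D1 D2; rewrite !inE.
case: (val v1) => [|a1 w1]; case: (val v2) => [|a2 w2] //=.
- move=> _ /andP[r _]; case: ifP => [/eqP[Ea]|//] E1; move: r.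
  by rewrite Ea -E1 /= /nr /linv eqxx.
- move=> /andP[r _] _; case: ifP => [/eqP[Ea]|//] E1; move: r.
  by rewrite Ea E1 /= /nr /linv eqxx.
move=> /andP[r1 _] /andP[r2 _].
case: ifP=> [/eqP[Ea1]|h1]; case: ifP=> [/eqP[Ea2]|h2].
- by rewrite Ea1 Ea2 => ->.
- move=> E1; move: r1; by rewrite Ea1 E1 /= /nr /linv eqxx.
- move=> E1; move: r2; by rewrite Ea2 -E1 /= /nr /linv eqxx.
by case=> -> ->.
Qed.

Definition piv : {perm X} := proj1_sig (ext_perm fp_inj).
Lemma pivE v : v \in Dp -> piv v = fp v.
Proof. exact: (proj2_sig (ext_perm fp_inj)). Qed.
End Piv.

Definition gen (a : L) : {perm X} := if a.2 then piv a.1 else (piv a.1)^-1%g.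
Lemma gen_linv a : gen (linv a) = (gen a)^-1%g.
Proof. by rewrite /gen /linv; case: a => i [] //=; rewrite invgK. Qed.

Fixpoint eval (w : seq L) : {perm X} :=
  if w is a :: w' then (eval w' * gen a)%g else 1%g.

Lemma eval_rcons w a : eval (rcons w a) = (gen a * eval w)%g.
Proof. by elim: w => [|b w IH] /=; rewrite ?mulg1 ?mul1g // IH mulgA. Qed.

Lemma red_behead a w : red (a :: w) -> red w.
Proof. by rewrite /red /=; case: w => //= b w /andP[]. Qed.

Lemma eval_act w : red w -> size w <= g -> val (eval w eps) = w.
Proof.
elim: w => [|a w IH] /=; first by rewrite perm1.
move=> rw sw.
have IHw := IH (red_behead rw) (ltnW sw).
rewrite permM.
move: rw; case: a => i [] rw; rewrite /gen /=.
- have zD : eval w eps \in Dp i.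
    rewrite inE IHw (red_behead rw) /=; apply/orP; right; exact: sw.
  rewrite pivE // fpE // /fpw IHw.
  case: w {IH IHw sw zD} rw => //= b w /andP[hb _].
  by case: ifP => // /eqP[Eb]; move: hb; rewrite Eb /nr /linv eqxx.
- have yin : (i, false) :: w \in allw g by rewrite mem_allw.
  pose y : X := SeqSub yin.
  have yD : y \in Dp i by rewrite inE /= rw eqxx.
  have Ey : piv i y = eval w eps.
    by apply: val_inj; rewrite pivE // fpE // /fpw /= eqxx IHw.
  by rewrite -Ey permK.
Qed.

Lemma eval_inj u v : red u -> size u <= g -> red v -> size v <= g ->
  eval u = eval v -> u = v.
Proof.
move=> ru su rv sv E; rewrite -(eval_act ru su) -(eval_act rv sv); by rewrite E.
Qed.

End FreeAct.

Section Host.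
Variables (k g : nat).
Definition HV := ({perm X k g} * bool)%type.
Definition hadj (x y : HV) :=
  (x.2 != y.2) && [exists a : L k, y.1 == (gen g a * x.1)%g].
Lemma hadj_sym : symmetric hadj.
Proof.
move=> x y; rewrite /hadj eq_sym; congr (_ && _).
apply/existsP/existsP => -[a /eqP E]; exists (linv a);
  by rewrite gen_linv E mulgA mulVg mul1g.
Qed.
Lemma hadj_irr : irreflexive hadj.
Proof. by move=> x; rewrite /hadj eqxx. Qed.
Definition Hg : sgraph := SGraph hadj_sym hadj_irr.

Lemma gen_inj : 0 < g -> injective (@gen k g).
Proof.
move=> g0 a b E.
have : [:: a] = [:: b].
  by apply: (@eval_inj k g) => //=; rewrite E.
by case.
Qed.

Lemma nbrs_Hg (x : Hg) : [set y : Hg | adj Hg x y] = [set ((gen g a * x.1)%g, ~~ x.2) | a : L k].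
Proof.
apply/setP => -[q c]; rewrite inE /= /hadj /=.
apply/andP/imsetP.
  by case=> /= h /existsP[a /eqP E]; exists a => //; rewrite -E; case: c h; case: (x.2).
case=> a _ [-> ->]; split; first by case: (x.2).
by apply/existsP; exists a.
Qed.

Lemma deg_Hg (x : Hg) : 0 < g -> deg x = k * 2.
Proof.
move=> g0; rewrite /deg nbrs_Hg card_imset.
  by rewrite /L card_prod card_ord card_bool.
by move=> a b [/mulIg /(gen_inj g0)].
Qed.

Lemma Hg_bip : bipartite Hg.
Proof. by exists (fun x : Hg => x.2) => u v /andP[]. Qed.

Lemma Hg_maxdeg : 0 < g -> maxdeg Hg <= k * 2.
Proof. by move=> g0; apply/bigmax_leqP => x _; rewrite deg_Hg. Qed.
End Host.

Lemma sum_boolS (T : finType) (S : {pred T}) (P : pred T) :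
  \sum_(y in S) (P y : nat) = #|[set y in S | P y]|.
Proof.
rewrite -sum1_card [RHS]big_mkcond [LHS]big_mkcond /=.
by apply: eq_bigr => y _; rewrite inE; case: (y \in S); case: (P y).
Qed.

Section Count.
Variables (H : sgraph) (s D : nat) (col : H -> H -> 'I_s).
Hypothesis colE : edge_colouring col.
Definition fc (c : 'I_s) (x y : H) : nat := adj H x y && (col x y == c).
Definition Ec c (S : {set H}) := \sum_(x in S) \sum_(y in S) fc c x y.

Lemma fc_sym c x y : fc c x y = fc c y x.
Proof.
rewrite /fc adj_sym; case E: (adj H y x) => //=.
by rewrite colE // adj_sym.
Qed.

Lemma Ec_bound c :
  (forall S : {set H}, S != set0 -> exists2 x, x \in S & \sum_(y in S) fc c x y < D) ->
  forall S, Ec c S <= 2 * (D - 1) * (#|S| - 1).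
Proof.
move=> Hb S; move Hn : #|S| => n; elim: n S Hn => [|n IH] S Hn.
  by move/eqP: Hn; rewrite cards_eq0 => /eqP ->; rewrite /Ec big_set0.
have S0 : S != set0 by rewrite -card_gt0 Hn.
case: (Hb S S0) => x xS hx.
have Sx : #|S :\ x| = n by move: Hn; rewrite (cardsD1 x S) xS add1n => -[].
have {}IH := IH _ Sx.
set o := \sum_(y in S :\ x) fc c x y.
have go : \sum_(y in S) fc c x y = o.
  by rewrite (big_setD1 x xS) /= /fc adj_irr.
have oS : o <= n.
  rewrite -Sx -sum1_card; apply: leq_sum => y _; by rewrite /fc; case: (_ && _).
have E : Ec c S = o + o + Ec c (S :\ x).
  rewrite /Ec (big_setD1 x xS) /= go -addnA; congr (_ + _).
  rewrite -[X in X + _](_ : \sum_(y in S :\ x) fc c y x = o); last first.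
    by apply: eq_bigr => y _; rewrite fc_sym.
  rewrite -big_split /=; apply: eq_bigr => y yS.
  have yS' : y \in S by move: yS; rewrite inE => /andP[].
  by rewrite (big_setD1 x xS).
rewrite E; rewrite go in hx; move: IH.
case: n {Hn Sx} oS => [|n] oS IH; first lia.
rewrite !subn1 /= mulnS; lia.
Qed.

Lemma good_set d : (forall x : H, deg x = d) -> 0 < #|H| ->
  s * (D - 1) * 2 = d -> 0 < s * (D - 1) ->
  exists c : 'I_s, exists2 S : {set H}, S != set0 &
    forall x, x \in S -> D <= \sum_(y in S) fc c x y.
Proof.
move=> degd n0 ed sD.
case: (boolP [exists c, [exists S : {set H}, (S != set0) &&
    [forall x in S, D <= \sum_(y in S) fc c x y]]]).
  move/existsP => [c /existsP [S /andP [S0 /forall_inP h]]].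
  by exists c; exists S => // x xS; apply: h.
rewrite negb_exists => /forallP nc.
have Hb : forall c (S : {set H}), S != set0 ->
    exists2 x, x \in S & \sum_(y in S) fc c x y < D.
  move=> c S S0; move: (nc c); rewrite negb_exists => /forallP /(_ S).
  rewrite S0 /= => /forall_inPn [x xS h]; exists x => //; by rewrite ltnNge.
have up : \sum_(c < s) Ec c [set: H] <= s * (2 * (D - 1) * (#|H| - 1)).
  have : \sum_(c < s) Ec c [set: H] <= \sum_(c < s) (2 * (D - 1) * (#|H| - 1)).
    by apply: leq_sum => c _; have := Ec_bound (Hb c) [set: H]; rewrite cardsT.
  by rewrite sum_nat_const card_ord.
have tot : \sum_(c < s) Ec c [set: H] = #|H| * d.
  rewrite /Ec exchange_big /= -cardsT -sum_nat_const; apply: eq_bigr => x _.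
  rewrite exchange_big /= -(degd x) /deg.
  have -> : [set w | adj H x w] = [set w in [set: H] | adj H x w].
    by apply/setP => w; rewrite !inE.
  rewrite -sum_boolS; apply: eq_bigr => y _.
  case A0: (adj H x y); have A : adj H x y = _ := A0.
    rewrite (bigD1 (col x y)) //= {1}/fc A eqxx /= big1 // => c /negbTE.
    by rewrite /fc A eq_sym => ->.
  by apply: big1 => c _; rewrite /fc A.
move: up; rewrite tot -ed => up; exfalso.
move: up n0 sD; move: #|H| (D - 1) => n D1.
case: n => // n; rewrite subn1 /= => up _ sD.
move: up.
have -> : n.+1 * (s * D1 * 2) = (s * D1 * 2) * n + s * D1 * 2 by nia.
have -> : s * (2 * D1 * n) = (s * D1 * 2) * n by nia.
move: (s * D1) sD => t t0; lia.
Qed.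
End Count.

Section Tree.
Variable T : sgraph.
Definition eU (U : {set T}) := [rel x y : T | (x \in U) && (y \in U) && adj T x y].
Definition connU (U : {set T}) := forall x y, x \in U -> y \in U -> connect (eU U) x y.

Lemma cross_path (U : {set T}) x p : path (adj T) x p -> x \in U -> last x p \notin U ->
  exists u v, [/\ u \in U, v \notin U & adj T u v].
Proof.
elim: p x => [|y p IH] x /=; first by move=> _ ->.
move=> /andP[axy pp] xU lU; case: (boolP (y \in U)) => yU.
  exact: IH pp yU lU.
by exists x, y.
Qed.

Lemma crossing (U : {set T}) x0 : connected T -> x0 \in U -> ~~ ([set: T] \subset U) ->
  exists u v, [/\ u \in U, v \notin U & adj T u v].
Proof.
move=> cT x0U /subsetPn [y _ yU].
case/connectP: (cT x0 y) => p pp ly.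
by apply: (cross_path pp x0U); rewrite -ly.
Qed.

Lemma path_eU_all (U : {set T}) x p : path (eU U) x p -> all (mem U) p.
Proof.
elim: p x => [|y p IH] x //= /andP[/andP[/andP[_ yU] _] pp].
by rewrite yU (IH _ pp).
Qed.

Lemma tree_unique (U : {set T}) v x y : acyclic T -> connU U -> v \notin U ->
  x \in U -> y \in U -> adj T v x -> adj T v y -> x = y.
Proof.
move=> acT cU vU xU yU avx avy; apply/eqP; apply/negP => /negP nxy.
case/connectP: (cU x y xU yU) => p pp ly.
move: ly; case: (shortenP pp) => p' pp' uq _ {pp} ly.
have allU := path_eU_all pp'.
have ne : p' != [::] by apply/eqP => E; move: ly; rewrite E /= => E'; rewrite E' eqxx in nxy.
have vn : v \notin x :: p'.
  rewrite in_cons negb_or; apply/andP; split.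
    by apply/eqP => E; move: vU; rewrite E xU.
  apply/negP => vp; move/allP: allU => /(_ v vp) /=; by rewrite (negbTE vU).
have U3 : uniq (v :: x :: p') by rewrite cons_uniq vn uq.
have S3 : 3 <= size (v :: x :: p') by case: (p') ne.
move/negP: (acT _ U3 S3); apply.
rewrite /= avx rcons_path (sub_path _ pp') /=; last by move=> a b /andP[].
by rewrite -ly adj_sym avy.
Qed.

Lemma connU_grow (U : {set T}) u v : connU U -> u \in U -> adj T u v -> connU (v |: U).
Proof.
move=> cU uU auv.
have sub : forall a b, a \in U -> b \in U -> connect (eU (v |: U)) a b.
  move=> a b aU bU; apply: (connect_sub _ (cU a b aU bU)) => c d /=.
  move=> /andP[/andP[cU' dU'] acd]; apply: connect1; by rewrite /= !inE cU' dU' acd !orbT.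
have uv : connect (eU (v |: U)) u v by apply: connect1; rewrite /= !inE eqxx uU auv !orbT.
have vu : connect (eU (v |: U)) v u by apply: connect1; rewrite /= !inE eqxx uU adj_sym auv !orbT.
move=> a b; rewrite !inE => /orP[/eqP->|aU] /orP[/eqP->|bU].
- exact: connect0.
- exact: connect_trans vu (sub _ _ uU bU).
- exact: connect_trans (sub _ _ aU uU) uv.
- exact: sub.
Qed.
End Tree.

Lemma red_rcons k (w : seq (L k)) a : red w -> (w = [::]) \/ (a != linv (last a w)) -> red (rcons w a).
Proof.
case: w => [|b w] //= rw [//|h].
by rewrite /red /= rcons_path rw /nr.
Qed.

Section Embed.
Variables (s : nat) (T : sgraph) (k g : nat).
Variables (col : Hg k g -> Hg k g -> 'I_s) (c : 'I_s) (S : {set Hg k g}).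
Variables (r : {perm X k g}) (b0 : bool) (a0 : L k).
Hypothesis colE : edge_colouring col.
Hypothesis Sgood : forall x, x \in S -> maxdeg T <= \sum_(y in S) fc col c x y.
Hypothesis rS : (r, b0) \in S.
Hypothesis gT : #|T| <= g.
Hypothesis acT : acyclic T.
Hypothesis cT : connected T.

Definition psi (w : T -> seq (L k)) (u : T) : Hg k g :=
  ((eval g (w u) * r)%g, odd (size (w u)) (+) b0).

Record Inv (U : {set T}) (w : T -> seq (L k)) : Prop := {
  i_red : forall u, u \in U -> red (w u) /\ size (w u) < #|U|;
  i_S : forall u, u \in U -> psi w u \in S;
  i_adj : forall u v, u \in U -> v \in U -> adj T u v ->
     adj (Hg k g) (psi w u) (psi w v) /\ col (psi w u) (psi w v) = c;
  i_inj : {in U &, injective w};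
  i_par : forall u, u \in U -> w u != [::] ->
     exists2 x, x \in U & adj T u x /\ exists b, w u = rcons (w x) b;
  i_ch : forall u x a, u \in U -> x \in U -> w x = rcons (w u) a -> adj T u x;
  i_conn : connU U }.

Lemma avail (w : T -> seq (L k)) u : psi w u \in S ->
  maxdeg T <= #|[set a : L k | (((gen g a * (psi w u).1)%g, ~~ (psi w u).2) \in S) &&
       (col (psi w u) ((gen g a * (psi w u).1)%g, ~~ (psi w u).2) == c)]|.
Proof.
move=> xS; set x := psi w u.
apply: (leq_trans (Sgood xS)).
rewrite /fc (sum_boolS S (fun y => adj (Hg k g) x y && (col x y == c))).
pose A : {set L k} := [set a | (((gen g a * x.1)%g, ~~ x.2) \in S) &&
       (col x ((gen g a * x.1)%g, ~~ x.2) == c)].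
apply: (@leq_trans #|[set ((gen g a * x.1)%g, ~~ x.2) | a in A]|); last exact: leq_imset_card.
apply: subset_leq_card; apply/subsetP => y; rewrite inE => /andP[yS /andP[axy cxy]].
have : y \in [set y : Hg k g | adj (Hg k g) x y] by rewrite inE.
rewrite nbrs_Hg => /imsetP[a _ Ey]; apply/imsetP; exists a => //.
by rewrite inE -Ey yS cxy.
Qed.

Lemma step U w x0 : Inv U w -> ~~ ([set: T] \subset U) -> x0 \in U ->
  exists v w', v \notin U /\ Inv (v |: U) w'.
Proof.
move=> I nT x0U.
case: (crossing cT x0U nT) => u [v [uU vU auv]].
have uniqv : forall z, z \in U -> adj T v z -> z = u.
  by move=> z zU avz; apply: (tree_unique acT (i_conn I) vU zU uU avz); rewrite adj_sym.
set x := psi w u.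
have xS : x \in S := i_S I uU.
pose A : {set L k} := [set a | (((gen g a * x.1)%g, ~~ x.2) \in S) &&
       (col x ((gen g a * x.1)%g, ~~ x.2) == c)].
have cA : maxdeg T <= #|A| := avail xS.
pose E : {set L k} := [set a | (w u != [::]) && (a == linv (last a (w u)))] :|:
   [set a | [exists z in U, w z == rcons (w u) a]].
pose N := [set z in U | adj T u z].
pose lt z := if size (w u) < size (w z) then last a0 (w z) else linv (last a0 (w u)).
have EN : E \subset lt @: N.
  apply/subsetP => a; rewrite !inE => /orP[/andP[ne /eqP Ea] | /existsP[z /andP[zU /eqP Ez]]].
  - case: (i_par I uU ne) => y yU [auy [b Eb]].
    apply/imsetP; exists y; first by rewrite inE yU auy.
    by rewrite /lt Eb size_rcons ltnNge leqnSn /= Ea Eb !last_rcons.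
  - apply/imsetP; exists z; first by rewrite inE zU (i_ch I uU zU Ez).
    by rewrite /lt Ez size_rcons ltnSn last_rcons.
have du : deg u <= maxdeg T by rewrite /maxdeg; apply: (@leq_bigmax _ (@deg T) u).
have vnb : v \in [set z | adj T u z] by rewrite inE.
have cN : #|N| <= deg u - 1.
  have : N \subset [set z | adj T u z] :\ v.
    apply/subsetP => z; rewrite !inE => /andP[zU auz]; rewrite auz andbT.
    by apply/eqP => E'; move: vU; rewrite -E' zU.
  move/subset_leq_card; rewrite /deg (cardsD1 v [set z | adj T u z]) vnb.
  by rewrite add1n subn1.
have du1 : 0 < deg u by rewrite /deg (cardsD1 v) vnb.
have cE : #|E| < #|A|.
  have h1 : #|E| <= #|lt @: N| := subset_leq_card EN.
  have h2 : #|lt @: N| <= #|N| := leq_imset_card lt (mem N).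
  lia.
have [a aA aE] : exists2 a, a \in A & a \notin E.
  case: (boolP (A \subset E)) => [sub|/subsetPn//].
  by have := subset_leq_card sub; lia.
move: aA aE; rewrite !inE negb_or => /andP[aS /eqP aC] /andP[aE1 aE2].
pose w' z := if z == v then rcons (w u) a else w z.
have w'v : w' v = rcons (w u) a by rewrite /w' eqxx.
have w'U : forall z, z \in U -> w' z = w z.
  move=> z zU; rewrite /w'; case: eqP => // E'; by move: vU; rewrite -E' zU.
have psiU : forall z, z \in U -> psi w' z = psi w z.
  by move=> z zU; rewrite /psi w'U.
have psiv : psi w' v = ((gen g a * x.1)%g, ~~ x.2).
  by rewrite /psi w'v eval_rcons size_rcons /= mulgA addNb.
have adjxv : adj (Hg k g) x (psi w' v) /\ col x (psi w' v) = c.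
  rewrite psiv; split; last exact: aC.
  rewrite /Hg /= /hadj /=; apply/andP; split; first by case: (_ (+) b0).
  by apply/existsP; exists a.
have noz : forall z, z \in U -> w z <> rcons (w u) a.
  move=> z zU Ez; move: aE2; apply/negP; rewrite negbK; apply/existsP; exists z.
  by rewrite zU Ez eqxx.
exists v, w'; split => //.
have cU : #|v |: U| = #|U|.+1 by rewrite cardsU1 vU.
constructor.
- move=> z; rewrite cU => /setU1P[->|zU].
    rewrite w'v size_rcons ltnS; split; last exact: (i_red I uU).2.
    apply: red_rcons; first exact: (i_red I uU).1.
    by case: (w u) aE1 => [|b l]; [left | right; rewrite negb_and /= in aE1].
  rewrite w'U //; case: (i_red I zU) => -> /ltnW; by rewrite ltnS.
- move=> z; move=> /setU1P[->|zU]; first by rewrite psiv.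
  by rewrite psiU // (i_S I zU).
- move=> z1 z2; move=> /setU1P[->|z1U] /setU1P[->|z2U].
  + by rewrite adj_irr.
  + move=> az; have Ez := uniqv _ z2U az; rewrite Ez (psiU u uU).
    case: adjxv => ax cx; split; first by rewrite adj_sym.
    by rewrite colE // adj_sym.
  + move=> az; rewrite adj_sym in az; have Ez := uniqv _ z1U az; by rewrite Ez (psiU u uU).
  + by move=> az; rewrite !psiU //; apply: (i_adj I).
- move=> z1 z2; move=> /setU1P[->|z1U] /setU1P[->|z2U] //.
  + by rewrite w'v w'U // => E'; case: (noz _ z2U (esym E')).
  + by rewrite w'v w'U // => E'; case: (noz _ z1U E').
  + by rewrite !w'U //; apply: (i_inj I).
- move=> z; move=> /setU1P[->|zU] ne.
    exists u; first by rewrite inE uU orbT.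
    by split; [rewrite adj_sym | exists a; rewrite w'v w'U].
  rewrite w'U // in ne; case: (i_par I zU ne) => y yU [azy [b Eb]].
  exists y; first by rewrite inE yU orbT.
  by split => //; exists b; rewrite !w'U.
- move=> u1 x1 a1; move=> /setU1P[->|u1U] /setU1P[->|x1U].
  + by move/(f_equal size); rewrite size_rcons => /eqP; rewrite eqn_leq ltnn andbF.
  + rewrite w'v (w'U x1 x1U) => Ex.
    have ne : w x1 != [::] by rewrite Ex; case: (w u).
    case: (i_par I x1U ne) => y yU [_ [b Eb]].
    move: Ex; rewrite Eb => /rcons_inj [Ey _]; by case: (noz _ yU Ey).
  + rewrite w'v (w'U u1 u1U) => /rcons_inj [Eu _].
    by rewrite -((i_inj I) _ _ uU u1U Eu).
  + by rewrite !w'U //; apply: (i_ch I).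
- exact: connU_grow (i_conn I) uU auv.
Qed.

Lemma base x0 : Inv [set x0] (fun _ => [::]).
Proof.
constructor.
- by move=> u _; rewrite cards1.
- by move=> u _; rewrite /psi /= mul1g.
- by move=> u v /set1P-> /set1P->; rewrite adj_irr.
- by move=> u v /set1P-> /set1P->.
- by [].
- by move=> u x a _ _ /(f_equal size); rewrite size_rcons.
- by move=> u v /set1P-> /set1P->; apply: connect0.
Qed.

Lemma grow (x0 : T) n : n < #|T| -> exists (U : {set T}) w, #|U| = n.+1 /\ Inv U w.
Proof.
elim: n => [|n IH] hn.
  by exists [set x0], (fun _ => [::]); rewrite cards1; split => //; apply: base.
case: (IH (ltnW hn)) => U [w [cU I]].
have nT : ~~ ([set: T] \subset U).
  apply/negP => /subset_leq_card; rewrite cardsT cU => h.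
  by have := leq_trans hn h; rewrite ltnn.
have : U != set0 by rewrite -card_gt0 cU.
case/set0Pn => y yU.
case: (step I nT yU) => v [w' [vU I']].
by exists (v |: U), w'; split => //; rewrite cardsU1 vU cU.
Qed.

Lemma embed (x0 : T) : exists phi : T -> Hg k g, injective phi /\
  forall u v, adj T u v -> adj (Hg k g) (phi u) (phi v) /\ col (phi u) (phi v) = c.
Proof.
have T0 : 0 < #|T| by apply/card_gt0P; exists x0.
case: (grow x0 (n := #|T|.-1)); first by rewrite prednK.
move=> U [w [cU I]].
have UT : forall z, z \in U.
  have : U == [set: T] by rewrite eqEcard subsetT cardsT cU prednK // leqnn.
  by move/eqP => -> z; rewrite inE.
exists (psi w); split; last by move=> u v; apply: (i_adj I).
move=> z1 z2 /(f_equal fst) /= /mulIg E.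
apply: (i_inj I) => //.
have [r1 s1] := i_red I (UT z1); have [r2 s2] := i_red I (UT z2).
rewrite cU prednK // in s1 s2.
apply: (eval_inj r1 _ r2 _ E).
  exact: leq_trans (ltnW s1) gT.
exact: leq_trans (ltnW s2) gT.
Qed.
End Embed.

Theorem theorem2 (s : nat) (T : sgraph) :
  1 <= s -> is_tree T -> 2 <= maxdeg T ->
  br_deg_le T s (2 * s * (maxdeg T - 1)).
Proof.
move=> s1 [cT acT] mT.
have [x0 _] : exists x0 : T, true.
  case: (pickP (@predT T)) => [x _|none]; first by exists x.
  by move: mT; rewrite /maxdeg big_pred0.
set D := maxdeg T in mT *.
set k := s * (D - 1).
have k0 : 0 < k by rewrite /k muln_gt0 s1 subn_gt0.
have g0 : 0 < #|T| by apply/card_gt0P; exists x0.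
exists (Hg k #|T|); split; first exact: Hg_bip.
split; last first.
  apply: (leq_trans (Hg_maxdeg k g0)); by rewrite /k mulnC mulnA.
move=> col colE.
have H0 : 0 < #|Hg k #|T| | by apply/card_gt0P; exists (1%g, true).
have [c [S S0 Sg]] := @good_set (Hg k #|T|) s D col colE (k * 2)
   (fun x => deg_Hg x g0) H0 erefl k0.
case/set0Pn: S0 => -[r b0] rS.
have := @embed s T k #|T| col c S r b0 (Ordinal k0, true) colE Sg rS (leqnn _) acT cT x0.
case=> phi [phiI phiE]; by exists c, phi.
Qed.
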